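(* Consider an asymptotic regime indexed by the sample size $n\to\infty$, with $p=p_n>n$. Let $X=(X_1,\dots,X_p)\in\mathbb{R}^{n\times p}$ be a random design matrix, and suppose: (A1) (general position) with probability one, for any $k<\min\{n,p\}$, any indices $i_1,\dots,i_{k+1}$ and any signs $\sigma_1,\dots,\sigma_{k+1}\in\{-1,1\}$, the affine span of $\sigma_1X_{i_1},\dots,\sigma_{k+1}X_{i_{k+1}}$ contains no element of $\{\pm X_i: i\neq i_1,\dots,i_{k+1}\}$; (A2) there are positive constants $C_{\min}$ and $K$ (with $n$ divisible by $K$) such that $\lim_{n\to\infty}P\big(\phi_{\min}(n/K)\ge C_{\min}\big)=1$; (A3) there is a positive constant $C_{\max}$ such that $\lim_{n\to\infty}P\big(\phi_{\max}(n)\le C_{\max}\big)=1$. Let the node-wise Lasso tuning parameter satisfy $\lambda_1\ge C_1/\sqrt{n}$ for some constant $C_1>0$. Then $$\lim_{n\to\infty}P\left(\frac{1}{\tilde\tau_1^2}\le \frac{1}{C_{\min}}+\frac{C_{\max}K}{C_1^2}\right)=1.$$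
   Context: For $s\ge1$, the restricted maximum and minimum eigenvalues are $\phi_{\max}(s)=\max_{1\le\|z\|_0\le s}\frac{\|Xz\|^2}{n\|z\|^2}$ and $\phi_{\min}(s)=\min_{1\le\|z\|_0\le s}\frac{\|Xz\|^2}{n\|z\|^2}$. Let $X_{-1}$ be $X$ with the first column removed. The node-wise Lasso is $\hat\gamma_1=\arg\min_{\gamma\in\mathbb{R}^{p-1}}\frac1n\|X_1-X_{-1}\gamma\|^2+2\lambda_1\|\gamma\|_1$, and $\tilde\tau_1^2=\frac1n\|X_1-X_{-1}\hat\gamma_1\|^2$. *)

(* Defs.v *)
From HB Require Import structures.
From mathcomp Require Import all_boot all_order all_algebra.
From mathcomp Require Import all_classical all_reals all_analysis.
Set Implicit Arguments. Unset Strict Implicit. Unset Printing Implicit Defensive.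
Import Order.TTheory GRing.Theory Num.Theory.
Local Open Scope classical_set_scope.
Local Open Scope ring_scope.

Section Defs.
Variable R : realType.

Definition sqnorm (m : nat) (v : 'cV[R]_m) : R := \sum_(i < m) v i 0 ^+ 2.

Definition l1norm (m : nat) (v : 'cV[R]_m) : R := \sum_(i < m) `|v i 0|.

Definition l0norm (m : nat) (v : 'cV[R]_m) : nat := #|[set i | v i 0 != 0]|.

Definition rayleigh (n p : nat) (X : 'M[R]_(n, p)) (z : 'cV[R]_p) : R :=
  sqnorm (X *m z) / (n%:R * sqnorm z).

Definition sparse_quotients (n p : nat) (X : 'M[R]_(n, p)) (s : nat) : set R :=
  [set rayleigh X z | z in [set z : 'cV[R]_p | (1 <= l0norm z <= s)%N]].

Definition phi_max (n p : nat) (X : 'M[R]_(n, p)) (s : nat) : R :=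
  sup (sparse_quotients X s).
Definition phi_min (n p : nat) (X : 'M[R]_(n, p)) (s : nat) : R :=
  inf (sparse_quotients X s).

(* first column X_1 and X_{-1} (X with first column removed);
   X has p = q.+1 columns *)
Definition col1 (n q : nat) (X : 'M[R]_(n, q.+1)) : 'cV[R]_n := col ord0 X.
Definition colm1 (n q : nat) (X : 'M[R]_(n, q.+1)) : 'M[R]_(n, q) := col' ord0 X.

Definition nodewise_obj (n q : nat) (X : 'M[R]_(n, q.+1)) (lam : R)
    (g : 'cV[R]_q) : R :=
  n%:R^-1 * sqnorm (col1 X - colm1 X *m g) + 2 * lam * l1norm g.

Definition is_nodewise_lasso (n q : nat) (X : 'M[R]_(n, q.+1)) (lam : R)
    (g : 'cV[R]_q) : Prop :=
  forall g' : 'cV[R]_q, nodewise_obj X lam g <= nodewise_obj X lam g'.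

Definition tau1_sq (n q : nat) (X : 'M[R]_(n, q.+1)) (g : 'cV[R]_q) : R :=
  n%:R^-1 * sqnorm (col1 X - colm1 X *m g).

Definition sgn (b : bool) : R := (-1) ^+ b.

Definition general_position (n p : nat) (X : 'M[R]_(n, p)) : Prop :=
  forall k : nat, (k < minn n p)%N ->
  forall (idx : 'I_k.+1 -> 'I_p) (sg : 'I_k.+1 -> bool) (i : 'I_p),
    (forall j, idx j != i) ->
    forall (s : bool) (c : 'I_k.+1 -> R),
      \sum_j c j = 1 ->
      \sum_j c j *: (sgn (sg j) *: col (idx j) X) != sgn s *: col i X.

End Defs.

Section Prob.
Variables (d : measure_display) (T : measurableType d) (R : realType).
Variable P : probability T R.

Definition with_prob_one (E : set T) : Prop :=
  exists A, measurable A /\ A `<=` E /\ P A = 1%E.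

(* lim_{n -> oo, K | n} P(E n) = 1, where P(E n) is the inner probability
   (coincides with P(E n) when E n is measurable) *)
Definition prob_to_one (K : nat) (E : nat -> set T) : Prop :=
  forall eps : R, 0 < eps -> exists N : nat, forall n : nat,
    (N <= n)%N -> (K %| n)%N ->
    exists A, measurable A /\ A `<=` E n /\ ((1 - eps)%:E <= P A)%E.
End Prob.

(* Main.v *)
Require Import Defs.
From HB Require Import structures.
From mathcomp Require Import all_boot all_order all_algebra.
From mathcomp Require Import all_classical all_reals all_analysis.
From mathcomp Require Import ring lra.
Set Implicit Arguments. Unset Strict Implicit. Unset Printing Implicit Defensive.
Import Order.TTheory GRing.Theory Num.Theory.
Local Open Scope ring_scope.

Section Det.
Variable R : realType.

Lemma l0E m (v : 'cV[R]_m) : l0norm v = #|[set i | v i 0%R != 0%R]|.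
Proof. rewrite /l0norm; apply: eq_card => i; rewrite inE. apply/idP/idP; rewrite in_setE //. Qed.

Lemma CS m (a b : 'I_m -> R) :
  (\sum_i a i * b i) ^+ 2 <= (\sum_i a i ^+ 2) * (\sum_i b i ^+ 2).
Proof.
set A := \sum_i a i ^+ 2; set B := \sum_i a i * b i; set C := \sum_i b i ^+ 2.
have A0 : 0 <= A by apply: sumr_ge0 => i _; exact: sqr_ge0.
have key : forall t, 0 <= t ^+ 2 * A - 2 * t * B + C.
  move=> t; have -> : t ^+ 2 * A - 2 * t * B + C = \sum_i (t * a i - b i) ^+ 2.
    rewrite /A /B /C 2!mulr_sumr -sumrB -big_split /=.
    by apply: eq_bigr => i _; ring.
  by apply: sumr_ge0 => i _; exact: sqr_ge0.
have [A0'|Apos] := eqVneq A 0.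
  have ha : forall i, a i = 0.
    move=> i; apply/eqP; rewrite -sqrf_eq0; apply/eqP.
    by move/eqP: A0'; rewrite psumr_eq0 => [/allP H|i0 _]; [apply/eqP; exact: H (mem_index_enum _) | exact: sqr_ge0].
  have -> : B = 0 by rewrite /B big1 // => i _; rewrite ha mul0r.
  by rewrite expr0n /= mulr_ge0 // sumr_ge0 // => i _; exact: sqr_ge0.
have Ap : 0 < A by rewrite lt_def Apos A0.
have := key (B / A).
have -> : (B / A) ^+ 2 * A - 2 * (B / A) * B + C = C - B ^+ 2 / A.
  by field; rewrite Apos.
rewrite subr_ge0 ler_pdivrMr // => H; by rewrite mulrC.
Qed.


Definition dot m (a b : 'cV[R]_m) := \sum_i a i 0 * b i 0.

Lemma sqnormB m (a b : 'cV[R]_m) t :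
  sqnorm (a - t *: b) = sqnorm a - 2 * t * dot a b + t ^+ 2 * sqnorm b.
Proof.
rewrite /sqnorm /dot 2!mulr_sumr -sumrB -big_split /=.
by apply: eq_bigr => i _; rewrite !mxE; ring.
Qed.

Lemma sqnorm_ge0 m (a : 'cV[R]_m) : 0 <= sqnorm a.
Proof. by apply: sumr_ge0 => i _; exact: sqr_ge0. Qed.

Lemma CSdot m (a b : 'cV[R]_m) : dot a b ^+ 2 <= sqnorm a * sqnorm b.
Proof. exact: (CS (fun i => a i 0) (fun i => b i 0)). Qed.

Variables (n q : nat) (X : 'M[R]_(n, q.+1)).

Definition zvec (g : 'cV[R]_q) : 'cV[R]_q.+1 :=
  \col_k (oapp (fun j => - g j 0) 1 (unlift ord0 k)).

Lemma Xz g : X *m zvec g = Defs.col1 X - colm1 X *m g.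
Proof.
apply/matrixP => i j; rewrite !mxE big_ord_recl /= !mxE unlift_none /=.
rewrite (ord1 j) mulr1 -sumrN; congr (_ + _).
by apply: eq_bigr => k _; rewrite !mxE liftK /= mulrN.
Qed.

Lemma l0_zvec g : (l0norm (zvec g) <= (l0norm g).+1)%N.
Proof.
rewrite !l0E.
have sub : [set k | zvec g k 0 != 0] \subset ord0 |: (lift ord0 @: [set i | g i 0 != 0]).
  apply/fintype.subsetP => k; rewrite !inE mxE.
  case: (unliftP ord0 k) => [j ->|->] //=.
  rewrite oppr_eq0 => gj; apply/imsetP; exists j => //; by rewrite inE.
apply: (leq_trans (subset_leq_card sub)); rewrite cardsU1 -[X in (_ <= X)%N]add1n.
apply: leq_add; [exact: leq_b1 | exact: leq_imset_card].
Qed.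

Lemma l0_zvec1 g : (1 <= l0norm (zvec g))%N.
Proof.
rewrite l0E card_gt0; apply/set0Pn; exists ord0; by rewrite inE mxE unlift_none oner_eq0.
Qed.

Lemma sqnorm_zvec g : 1 <= sqnorm (zvec g).
Proof.
rewrite /sqnorm big_ord_recl /= mxE unlift_none /= expr1n lerDl.
by apply: sumr_ge0 => i _; exact: sqr_ge0.
Qed.

Variable lam : R.
Variable g : 'cV[R]_q.
Let r := Defs.col1 X - colm1 X *m g.

Lemma obj_step j t :
  nodewise_obj X lam (g + t *: delta_mx j 0) =
  n%:R^-1 * (sqnorm r - 2 * t * dot r (col j (colm1 X)) + t ^+ 2 * sqnorm (col j (colm1 X)))
  + 2 * lam * (l1norm g - `|g j 0| + `|g j 0 + t|).
Proof.
rewrite /nodewise_obj mulmxDr -scalemxAr -colE opprD addrA sqnormB; congr (_ + _ * _).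
rewrite /l1norm (bigD1 j) //= [in RHS](bigD1 j) //= !mxE eqxx mulr1.
rewrite [_ + _ - _]addrC addrA addNr add0r addrC; congr (_ + _).
apply: eq_bigr => k kj.
by rewrite !mxE (negbTE kj) mulr0 addr0.
Qed.

Lemma obj_g : nodewise_obj X lam g = n%:R^-1 * sqnorm r + 2 * lam * l1norm g.
Proof. by []. Qed.

Lemma kkt j : is_nodewise_lasso X lam g -> (0 < n)%N -> g j 0 != 0 ->
  n%:R * lam <= `|dot r (col j (colm1 X))|.
Proof.
move=> hl n0 gj0.
set c := dot r (col j (colm1 X)); set V := sqnorm (col j (colm1 X)).
set N : R := n%:R; have Np : 0 < N by rewrite ltr0n.
have V0 : 0 <= V by exact: sqnorm_ge0.
have key : forall t e, 0 < e -> `|g j 0 + t| = `|g j 0| - e -> `|t| = e ->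
    2 * N * lam <= 2 * `|c| + e * V.
  move=> t e e0 ht te.
  have := hl (g + t *: delta_mx j 0); rewrite obj_step obj_g ht.
  rewrite -subr_ge0.
  have -> : N^-1 * (sqnorm r - 2 * t * c + t ^+ 2 * V) +
      2 * lam * (l1norm g - `|g j 0| + (`|g j 0| - e)) -
      (N^-1 * sqnorm r + 2 * lam * l1norm g) = N^-1 * (- 2 * t * c + t ^+ 2 * V) - 2 * lam * e.
    by rewrite /N; field; rewrite pnatr_eq0 -lt0n.
  rewrite subr_ge0 ler_pdivlMl // => H.
  have tc : - (t * c) <= e * `|c| by rewrite -te -normrM -normrN ler_norm.
  have t2 : t ^+ 2 = e ^+ 2 by rewrite -te real_normK // num_real.
  have H2 : e * (2 * N * lam) <= e * (2 * `|c| + e * V).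
    rewrite t2 in H; nra.
  by rewrite ler_pM2l in H2.
rewrite leNgt; apply/negP => hc.
set a := `|g j 0|; have a0 : 0 < a by rewrite normr_gt0.
set e := Num.min a ((N * lam - `|c|) / (V + 1)).
have e0 : 0 < e by rewrite lt_min a0 divr_gt0 // ?subr_gt0 // ltr_wpDl.
have ea : e <= a by rewrite ge_min lexx.
have eb : e * (V + 1) <= N * lam - `|c|.
  by rewrite -ler_pdivlMr ?ltr_wpDl // ge_min lexx orbT.
have [gp|gn] : 0 < g j 0 \/ g j 0 < 0.
  by move: gj0; rewrite neq_lt => /orP[] ->; [right|left].
- have := key (- e) e e0; rewrite normrN (gtr0_norm e0).
  have -> : `|g j 0 + - e| = a - e.
    by rewrite /a (gtr0_norm gp) ger0_norm // subr_ge0 -(gtr0_norm gp).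
  move=> /(_ erefl erefl) H; nra.
- have := key e e e0; rewrite (gtr0_norm e0).
  have -> : `|g j 0 + e| = a - e.
    rewrite /a (ltr0_norm gn) ler0_norm ?opprD //.
    by have := ea; rewrite /a (ltr0_norm gn); lra.
  move=> /(_ erefl erefl) H; nra.
Qed.

Lemma sub_card (T : finType) (A : {set T}) k : (k <= #|A|)%N ->
  exists B : {set T}, B \subset A /\ #|B| = k.
Proof.
elim: k => [|k IH] hk; first by exists finset.set0; rewrite finset.sub0set cards0.
have [B [BA Bk]] := IH (ltnW hk).
have : (0 < #|A :\: B|)%N by rewrite cardsD (finset.setIidPr BA) Bk subn_gt0.
rewrite card_gt0 => /set0Pn [x]; rewrite inE => /andP [xB xA].
exists (x |: B); split; first by rewrite finset.subUset finset.sub1set xA BA.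
by rewrite cardsU1 xB Bk.
Qed.

Lemma sqnorm_mul m p (A : 'M[R]_(m, p)) (z : 'cV[R]_p) :
  sqnorm (A *m z) <= (\sum_i \sum_k A i k ^+ 2) * sqnorm z.
Proof.
rewrite /sqnorm mulr_suml; apply: ler_sum => i _; rewrite mxE.
exact: (CS (fun k => A i k) (fun k => z k 0)).
Qed.

Lemma rayleigh_ge0 (z : 'cV[R]_q.+1) : 0 <= rayleigh X z.
Proof. by rewrite /rayleigh divr_ge0 ?mulr_ge0 ?sqnorm_ge0. Qed.

Lemma rayleigh_ub (z : 'cV[R]_q.+1) :
  rayleigh X z <= (\sum_i \sum_k X i k ^+ 2) / n%:R.
Proof.
set F := \sum_i _.
have F0 : 0 <= F by apply: sumr_ge0 => i _; apply: sumr_ge0 => k _; exact: sqr_ge0.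
rewrite /rayleigh; have [D0|D0] := eqVneq (n%:R * sqnorm z) 0.
  by rewrite D0 invr0 mulr0 divr_ge0.
have Dp : 0 < n%:R * sqnorm z by rewrite lt_def D0 mulr_ge0 ?sqnorm_ge0.
have N0 : n%:R != 0 :> R by apply: contraNneq D0 => ->; rewrite mul0r.
rewrite ler_pdivrMr // mulrA divfK //; exact: sqnorm_mul.
Qed.

Lemma phi_max_ub s (z : 'cV[R]_q.+1) : (1 <= l0norm z <= s)%N ->
  rayleigh X z <= phi_max X s.
Proof.
move=> hz; apply: ub_le_sup; last by exists z.
exists ((\sum_i \sum_k X i k ^+ 2) / n%:R) => y [z' _ <-]; exact: rayleigh_ub.
Qed.

Lemma phi_min_lb s (z : 'cV[R]_q.+1) : (1 <= l0norm z <= s)%N ->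
  phi_min X s <= rayleigh X z.
Proof.
move=> hz; apply: ge_inf; last by exists z.
exists 0 => y [z' _ <-]; exact: rayleigh_ge0.
Qed.

Lemma fin_arith (s Kr N C1 Cmax Cmin Q : R) : 0 < s -> 0 < Kr -> N = s * Kr ->
  0 < C1 -> 0 < Cmax -> 0 < Cmin -> s * C1 ^+ 2 <= Cmax * Q ->
  0 < N^-1 * Q /\ (N^-1 * Q)^-1 <= Cmin^-1 + Cmax * Kr / C1 ^+ 2.
Proof.
move=> s0 K0 -> C10 Cx0 Cn0 H.
have Q0 : 0 < Q.
  have : 0 < Cmax * Q by apply: lt_le_trans H; rewrite mulr_gt0 // exprn_gt0.
  by rewrite pmulr_rgt0.
have NQ : 0 < (s * Kr)^-1 * Q by rewrite mulr_gt0 // invr_gt0 mulr_gt0.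
split => //.
apply: le_trans (_ : Cmax * Kr / C1 ^+ 2 <= _); last by rewrite lerDr invr_ge0 ltW.
rewrite invfM invrK ler_pdivlMr ?exprn_gt0 // mulrAC ler_pdivrMr //.
by rewrite mulrAC [Cmax * Kr * Q]mulrAC ler_pM2r.
Qed.

Lemma det (K : nat) (Cmin Cmax C1 : R) :
  (0 < n)%N -> (0 < K)%N -> (K %| n)%N -> 0 < Cmin -> 0 < Cmax -> 0 < C1 ->
  C1 / Num.sqrt n%:R <= lam ->
  Cmin <= phi_min X (n %/ K) -> phi_max X n <= Cmax ->
  is_nodewise_lasso X lam g ->
  0 < tau1_sq X g /\ (tau1_sq X g)^-1 <= Cmin^-1 + Cmax * K%:R / C1 ^+ 2.
Proof.
move=> n0 K0 Kn Cn0 Cx0 C10 hlam hmin hmax hl.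
set N : R := n%:R; have Np : 0 < N by rewrite ltr0n.
rewrite /tau1_sq -/r.
have [small|big] := ltnP (l0norm g) (n %/ K).
  have hz : (1 <= l0norm (zvec g) <= n %/ K)%N.
    by rewrite l0_zvec1 (leq_trans (l0_zvec g)).
  have := le_trans hmin (phi_min_lb hz); rewrite /rayleigh Xz -/r.
  have z1 := sqnorm_zvec g.
  have zp : 0 < sqnorm (zvec g) by apply: lt_le_trans z1.
  rewrite -/N ler_pdivlMr; last by rewrite mulr_gt0.
  move=> H.
  have H2 : Cmin <= N^-1 * sqnorm r.
    rewrite mulrC ler_pdivlMr //; apply: le_trans H.
    by rewrite ler_pM2l // ler_peMr // ltW.
  have tp : 0 < N^-1 * sqnorm r by apply: lt_le_trans H2.
  split => //; apply: le_trans (_ : Cmin^-1 <= _).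
    by rewrite lef_pV2 ?posrE.
  by rewrite lerDl divr_ge0 ?mulr_ge0 ?exprn_ge0 ?ler0n ?ltW.
set s := (n %/ K)%N.
have [S [Ssub Scard]] : exists S : {set 'I_q}, S \subset [set i | g i 0 != 0] /\ #|S| = s.
  by apply: sub_card; rewrite -l0E.
have s0 : (0 < s)%N by rewrite divn_gt0 // dvdn_leq.
have sn : (s <= n)%N by exact: leq_div.
have lamp : 0 < lam.
  by apply: lt_le_trans hlam; rewrite divr_gt0 // sqrtr_gt0.
set c := fun j => dot r (col j (colm1 X)).
have hc : forall j, j \in S -> N * lam <= `|c j|.
  move=> j jS; apply: kkt => //.
  by move/fintype.subsetP: Ssub => /(_ j jS); rewrite inE.
have cnz : forall j, j \in S -> c j != 0.
  move=> j /hc h; rewrite -normr_gt0; apply: lt_le_trans h; exact: mulr_gt0.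
set u : 'cV[R]_q.+1 := \col_k oapp (fun j => if j \in S then c j else 0) 0 (unlift ord0 k).
have supp : [set k | u k 0 != 0] = lift ord0 @: S.
  apply/setP => k; rewrite inE mxE; case: (unliftP ord0 k) => [j ->|->] /=.
    rewrite mem_imset; last exact: lift_inj.
    by case: ifP => jS; [rewrite cnz | rewrite eqxx].
  rewrite eqxx /=; apply/esym/negbTE/imsetP => -[j _] /eqP; by rewrite (negbTE (neq_lift _ _)).
have l0u : l0norm u = s by rewrite l0E supp card_imset //; exact: lift_inj.
have su : sqnorm u = \sum_(j in S) c j ^+ 2.
  rewrite /sqnorm big_ord_recl /= mxE unlift_none /= expr0n add0r [RHS]big_mkcond /=.
  by apply: eq_bigr => j _; rewrite mxE liftK /=; case: (j \in S) => //; rewrite expr0n.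
have du : dot (X *m u) r = sqnorm u.
  rewrite su /dot.
  under eq_bigr => i _ do rewrite mxE mulr_suml.
  rewrite exchange_big big_ord_recl /= big1 ?add0r; last first.
    by move=> i _; rewrite mxE unlift_none /= mulr0 mul0r.
  rewrite [RHS]big_mkcond; apply: eq_bigr => j _ /=.
  rewrite mxE liftK /=; case: ifP => jS; last by rewrite big1 // => i _; rewrite mulr0 mul0r.
  have cE : c j = \sum_i X i (lift ord0 j) * r i 0.
    by rewrite /c /dot; apply: eq_bigr => i _; rewrite !mxE mulrC.
  rewrite expr2 {3}cE mulr_sumr; apply: eq_bigr => i _; ring.
have sup : 0 < sqnorm u.
  rewrite su; have [j jS] : exists j, j \in S.
    by apply/set0Pn; rewrite -card_gt0 Scard.
  rewrite (bigD1 j) //= ltr_wpDr ?sumr_ge0 // => [k _|]; first exact: sqr_ge0.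
  by rewrite lt_def sqrf_eq0 cnz // sqr_ge0.
have lower : s%:R * (N * lam) ^+ 2 <= sqnorm u.
  rewrite su mulr_natl -Scard -sumr_const; apply: ler_sum => j jS.
  rewrite -(real_normK (num_real (c j))) ler_pXn2r ?nnegrE ?normr_ge0 //; [exact: hc | exact: mulr_ge0 (ltW Np) (ltW lamp)].
have hu : (1 <= l0norm u <= n)%N by rewrite l0u s0 sn.
have ray := le_trans (phi_max_ub hu) hmax.
move: ray; rewrite /rayleigh -/N => ray0.
have ray : sqnorm (X *m u) <= Cmax * (N * sqnorm u) by rewrite -ler_pdivrMr ?mulr_gt0.
have cs := CSdot (X *m u) r; rewrite du in cs.
have upper : sqnorm u <= Cmax * N * sqnorm r.
  have : sqnorm u * sqnorm u <= sqnorm u * (Cmax * N * sqnorm r).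
    rewrite -expr2; apply: (le_trans cs).
    have r0 := sqnorm_ge0 r.
    rewrite !mulrA ler_wpM2r //.
    have -> : sqnorm u * Cmax * N = Cmax * (N * sqnorm u) by ring.
    exact: ray.
  by rewrite ler_pM2l.
have lam2 : C1 ^+ 2 <= N * lam ^+ 2.
  have h2 : (C1 / Num.sqrt N) ^+ 2 <= lam ^+ 2.
    have a0 : 0 <= C1 / Num.sqrt N by rewrite divr_ge0 ?sqrtr_ge0 ?ltW.
    by rewrite !expr2; apply: ler_pM.
  move: h2; rewrite expr_div_n sqr_sqrtr; last exact: ltW.
  by rewrite ler_pdivrMr // mulrC.
have key : s%:R * C1 ^+ 2 <= Cmax * sqnorm r.
  rewrite -(ler_pM2l Np).
  have e1 : N * (s%:R * C1 ^+ 2) <= s%:R * (N * lam) ^+ 2.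
    have -> : s%:R * (N * lam) ^+ 2 = N * (s%:R * (N * lam ^+ 2)) by ring.
    by rewrite ler_pM2l // ler_pM2l ?ltr0n.
  have e2 : Cmax * N * sqnorm r = N * (Cmax * sqnorm r) by ring.
  by rewrite -e2; apply: le_trans e1 (le_trans lower upper).
have sK : N = s%:R * K%:R by rewrite -natrM divnK.
by apply: (fin_arith (s := s%:R) (Kr := K%:R) (N := N)); rewrite ?ltr0n.
Qed.

End Det.
Local Open Scope classical_set_scope.
Local Open Scope ring_scope.

Lemma prob_inter d (T : measurableType d) (R : realType) (P : probability T R)
  (A B : set T) (a b : R) : measurable A -> measurable B ->
  (a%:E <= P A)%E -> (b%:E <= P B)%E -> ((a + b - 1)%:E <= P (A `&` B))%E.
Proof.
move=> mA mB hA hB.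
have fin : forall Y, measurable Y -> P Y = (fine (P Y))%:E.
  by move=> Y mY; rewrite fineK // fin_num_measure.
have Bfin : (P B < +oo)%E by rewrite (fin B mB) ltry.
have hU := measureUfinr mA mB Bfin.
have le1 := probability_le1 P (measurableU _ _ mA mB).
have eA := fin _ mA; have eB := fin _ mB; have eI := fin _ (measurableI _ _ mA mB).
have eU := fin _ (measurableU _ _ mA mB).
have hU2 : (fine (P (A `|` B)))%:E = ((fine (P A))%:E + (fine (P B))%:E - (fine (P (A `&` B)))%:E)%E.
  by rewrite -eA -eB -eI -eU; exact: hU.
move: le1 hA hB; rewrite eU eA eB eI.
have hU3 : fine (P (A `|` B)) = fine (P A) + fine (P B) - fine (P (A `&` B)).
  by apply: EFin_inj; rewrite EFinB EFinD.
rewrite !lee_fin => le1 hA hB; lra.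
Qed.

Unset Implicit Arguments.
Local Open Scope classical_set_scope.
Local Open Scope ring_scope.

Theorem lemma1 (d : measure_display) (T : measurableType d) (R : realType)
  (P : probability T R) (q : nat -> nat)
  (X : forall n : nat, T -> 'M[R]_(n, (q n).+1))
  (Cmin Cmax C1 : R) (K : nat) (lam : nat -> R) :
  (forall n, (n < (q n).+1)%N) ->
  (forall n, with_prob_one P [set w | general_position (X n w)]) ->
  0 < Cmin -> (0 < K)%N ->
  prob_to_one P K (fun n => [set w | Cmin <= phi_min (X n w) (n %/ K)]) ->
  0 < Cmax ->
  prob_to_one P K (fun n => [set w | phi_max (X n w) n <= Cmax]) ->
  0 < C1 ->
  (forall n, C1 / Num.sqrt (n%:R) <= lam n) ->
  prob_to_one P K (fun n => [set w | forall g : 'cV[R]_(q n),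
      is_nodewise_lasso (X n w) (lam n) g ->
      0 < tau1_sq (X n w) g /\
      (tau1_sq (X n w) g)^-1 <= Cmin^-1 + Cmax * K%:R / C1 ^+ 2]).
Proof.
move=> _ _ Cn0 K0 hmin Cx0 hmax C10 hlam eps eps0.
have e2 : 0 < eps / 2 by rewrite divr_gt0.
have [N1 h1] := hmin _ e2; have [N2 h2] := hmax _ e2.
exists (maxn (maxn N1 N2) 1) => n hn Kn.
have n1 : (N1 <= n)%N by apply: leq_trans hn; rewrite leq_max leq_maxl.
have n2 : (N2 <= n)%N by apply: leq_trans hn; rewrite leq_max leq_maxr.
have n0 : (0 < n)%N by apply: leq_trans hn; rewrite leq_maxr.
have [A1 [mA1 [sA1 pA1]]] := h1 n n1 Kn.
have [A2 [mA2 [sA2 pA2]]] := h2 n n2 Kn.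
exists (A1 `&` A2); split; first exact: measurableI.
split.
  move=> w [w1 w2] g hl.
  exact: (det n0 K0 Kn Cn0 Cx0 C10 (hlam n) (sA1 w w1) (sA2 w w2) hl).
have := prob_inter mA1 mA2 pA1 pA2.
by have -> : 1 - eps / 2 + (1 - eps / 2) - 1 = 1 - eps by field.
Qed.
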